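(* Suppose Assumption A2 holds and $F^*>-\infty$. Then Algorithm (2-RCD), with the pair $\{i_k,j_k\}$ drawn i.i.d. uniformly among the $N(N-1)/2$ unordered pairs of distinct indices, generates a sequence $x^k$ satisfying, for all $k\ge0$, $$\min_{0\le l\le k}E\left[\left(M_2(x^l,\Gamma)\right)^2\right]\le\frac{N\,(F(x^0)-F^* )}{k+1}.$$
   Context: Block structure: $n=\sum_{i=1}^N n_i$ with $N\ge2$, $I_n=[U_1\ \dots\ U_N]$, $x_i=U_i^Tx$, $\nabla_if(x)=U_i^T\nabla f(x)$, $a_i=U_i^Ta$; for $i\ne j$, $s_{ij}=[s_i^T\ s_j^T]^T$, $\nabla_{ij}f(x)=[\nabla_if(x)^T\ \nabla_jf(x)^T]^T$, and $x+s_{ij}$ means $x+U_is_i+U_js_j$. Problem: $F^*=\min\{F(x):=f(x)+h(x):\ a^Tx=b\}$ with $a\in\mathbb{R}^n$ nonzero. Assumption A2: (i) $f$ is differentiable and there are constants $L_{ij}=L_{ji}>0$ with $\|\nabla_{ij}f(x+U_is_i+U_js_j)-\nabla_{ij}f(x)\|\le L_{ij}\|s_{ij}\|$ for all $s_{ij}$, $x$, $i,j=1,\dots,N$; (ii) $h$ is proper, convex, continuous, $h(x)=\sum_{i=1}^n h_i(x_i)$ with each $h_i:\mathbb{R}\to\mathbb{R}$ convex. Algorithm (2-RCD): given $x^0$ with $a^Tx^0=b$, for $k\ge0$ choose randomly a pair $(i_k,j_k)$, $i_k\ne j_k$, compute $d_{i_kj_k}=\arg\min\{ f(x^k)+\langle\nabla_{i_kj_k}f(x^k),s_{i_kj_k}\rangle+\frac{L_{i_kj_k}}{2}\|s_{i_kj_k}\|^2+h(x^k+s_{i_kj_k})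 :\ a_{i_k}^Ts_{i_k}+a_{j_k}^Ts_{j_k}=0\}$, and set $x^{k+1}=x^k+U_{i_k}d_{i_k}+U_{j_k}d_{j_k}$. Notation: $\Gamma_i=\frac1N\sum_{j=1}^N L_{ij}$. For $\Lambda\in\mathbb{R}^N$ with positive entries, $\|x\|_\Lambda=(\sum_i\Lambda_i\|x_i\|^2)^{1/2}$, $\|y\|_\Lambda^*=(\sum_i\Lambda_i^{-1}\|y_i\|^2)^{1/2}$, $D_\Lambda=\mathrm{diag}(\Lambda_1I_{n_1},\dots,\Lambda_NI_{n_N})$, $S=\{s:a^Ts=0\}$, $d_\Lambda(x)=\arg\min_{s\in S} f(x)+\langle\nabla f(x),s\rangle+\frac12\|s\|_\Lambda^2+h(x+s)$. Optimality measure: $M_2(x,\Gamma)=\|D_\Gamma\,d_{N\Gamma}(x)\|_\Gamma^*$. *)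

(* Defs.v *)
From Stdlib Require Import Reals.
From mathcomp Require Import all_boot.
Set Implicit Arguments. Unset Strict Implicit. Unset Printing Implicit Defensive.
Open Scope R_scope.

Definition sumI (m : nat) (F : 'I_m -> R) : R := \big[Rplus/0]_(i < m) F i.
Definition sumS {T : Type} (s : seq T) (F : T -> R) : R := \big[Rplus/0]_(p <- s) F p.

(* Block-structured vectors of R^n, n = sum_i n_i: x_i = U_i^T x is [x i],
   a vector of R^{n_i}; the scalar coordinates are x i l, l < n_i. *)
Definition vec (N : nat) (ns : 'I_N -> nat) := forall i : 'I_N, 'I_(ns i) -> R.

Section V.
Variables (N : nat) (ns : 'I_N -> nat).
Local Notation V := (vec ns).

Definition vadd (x y : V) : V := fun i l => x i l + y i l.
Definition vsub (x y : V) : V := fun i l => x i l - y i l.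
Definition inner (x y : V) : R := sumI (fun i => sumI (fun l : 'I_(ns i) => x i l * y i l)).
Definition blocknorm2 (x : V) (i : 'I_N) : R := sumI (fun l : 'I_(ns i) => x i l * x i l).
Definition enorm (x : V) : R := sqrt (sumI (fun i => blocknorm2 x i)).
Definition pairnorm2 (i j : 'I_N) (x : V) : R :=
  sumI (fun k => if (k == i) || (k == j) then blocknorm2 x k else 0).
Definition supported2 (i j : 'I_N) (s : V) : Prop :=
  forall k : 'I_N, ~~ ((k == i) || (k == j)) -> forall l, s k l = 0.
Definition normL (Lam : 'I_N -> R) (x : V) : R :=
  sqrt (sumI (fun i => Lam i * blocknorm2 x i)).
Definition dnormL (Lam : 'I_N -> R) (y : V) : R :=
  sqrt (sumI (fun i => / Lam i * blocknorm2 y i)).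
Definition Dmul (Lam : 'I_N -> R) (y : V) : V := fun i l => Lam i * y i l.

Definition is_gradient (f : V -> R) (g : V -> V) : Prop :=
  forall x eps, 0 < eps -> exists delta, 0 < delta /\
    forall hv : V, enorm hv < delta ->
      Rabs (f (vadd x hv) - f x - inner (g x) hv) <= eps * enorm hv.

Definition IsArgmin (P : V -> Prop) (phi : V -> R) (s : V) : Prop :=
  P s /\ forall t, P t -> phi s <= phi t.

Definition rcd_obj (f h : V -> R) (g : V -> V) (L : 'I_N -> 'I_N -> R)
  (x : V) (i j : 'I_N) (s : V) : R :=
  f x + inner (g x) s + L i j / 2 * pairnorm2 i j s + h (vadd x s).
Definition rcd_feas (a : V) (i j : 'I_N) (s : V) : Prop :=
  supported2 i j s /\ inner a s = 0.

Definition dL_obj (f h : V -> R) (g : V -> V) (Lam : 'I_N -> R) (x : V) (s : V) : R :=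
  f x + inner (g x) s + / 2 * (normL Lam s * normL Lam s) + h (vadd x s).

Definition Gam (L : 'I_N -> 'I_N -> R) (i : 'I_N) : R :=
  / INR N * sumI (fun j => L i j).

Definition rcd_step (dp : V -> 'I_N -> 'I_N -> V) (x : V) (p : 'I_N * 'I_N) : V :=
  vadd x (dp x p.1 p.2).
Fixpoint rcd_run (dp : V -> 'I_N -> 'I_N -> V) (x : V) (s : seq ('I_N * 'I_N)) : V :=
  match s with [::] => x | p :: s' => rcd_run dp (rcd_step dp x p) s' end.
End V.

(* The N(N-1)/2 unordered pairs {i,j}, i<>j, represented as (i,j) with i<j. *)
Definition upairs (N : nat) : seq ('I_N * 'I_N) :=
  [seq (i, j) | i : 'I_N <- enum 'I_N, j : 'I_N <- [seq j <- enum 'I_N | (nat_of_ord i < nat_of_ord j)%N]].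

(* Expectation of X(p_0,...,p_{l-1}) when p_0,...,p_{l-1} are i.i.d. uniform
   on the finite list ps. *)
Fixpoint Expect {T : Type} (ps : seq T) (l : nat) (X : seq T -> R) : R :=
  match l with
  | O => X [::]
  | S l' => / INR (size ps) * sumS ps (fun p => Expect ps l' (fun s => X (p :: s)))
  end.

Fixpoint min_upto (k : nat) (u : nat -> R) : R :=
  match k with O => u O | S k' => Rmin (min_upto k' u) (u k) end.

Definition convexR (phi : R -> R) : Prop :=
  forall u v t, 0 <= t <= 1 -> phi (t * u + (1 - t) * v) <= t * phi u + (1 - t) * phi v.

(* Main.v *)
Require Import Defs.
From HB Require Import structures.
From Stdlib Require Import Reals Lra Psatz FunctionalExtensionality.
From mathcomp Require Import all_boot.
Set Warnings "-notation-overridden -redundant-canonical-projection".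
Set Implicit Arguments. Unset Strict Implicit.
Open Scope R_scope.
Lemma RplusA : associative Rplus. Proof. move=> *; ring. Qed.
HB.instance Definition _ := Monoid.isComLaw.Build R 0 Rplus RplusA Rplus_comm Rplus_0_l.

Section B.
Variables (I : Type) (r : seq I) (P : pred I).
Lemma bscal c (F : I -> R) : \big[Rplus/0]_(i <- r | P i) (c * F i) = c * \big[Rplus/0]_(i <- r | P i) F i.
Proof. elim/big_rec2: _ => [|i y1 y2 _ ->]; ring. Qed.
Lemma bsub (F G : I -> R) : \big[Rplus/0]_(i <- r | P i) (F i - G i) = \big[Rplus/0]_(i <- r | P i) F i - \big[Rplus/0]_(i <- r | P i) G i.
Proof. elim/big_rec3: _ => [|i y1 y2 y3 _ ->]; ring. Qed.
Lemma badd (F G : I -> R) : \big[Rplus/0]_(i <- r | P i) (F i + G i) = \big[Rplus/0]_(i <- r | P i) F i + \big[Rplus/0]_(i <- r | P i) G i.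
Proof. elim/big_rec3: _ => [|i y1 y2 y3 _ ->]; ring. Qed.
Lemma ble (F G : I -> R) : (forall i, P i -> F i <= G i) -> \big[Rplus/0]_(i <- r | P i) F i <= \big[Rplus/0]_(i <- r | P i) G i.
Proof. move=> H; elim/big_ind2: _ => //; [lra| move=> *; lra]. Qed.
Lemma bconst c : \big[Rplus/0]_(i <- r) c = INR (size r) * c.
Proof. elim: r => [|x s IH]; first by rewrite big_nil /=; ring. rewrite big_cons IH. change (size (x :: s)) with (S (size s)). rewrite S_INR; ring. Qed.
End B.

Lemma sumI_const m c : sumI (fun _ : 'I_m => c) = INR m * c.
Proof. rewrite /sumI big_const_ord; elim: m => [|m IH]; first by simpl; ring.
rewrite iterS IH S_INR; ring. Qed.

Lemma sum_ne m (i : 'I_m) (F : 'I_m -> R) : sumI (fun j => if i == j then 0 else F j) = sumI F - F i.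
Proof.
rewrite /sumI (bigD1 i) //= eqxx [in RHS](bigD1 i) //=.
have -> : \big[Rplus/0]_(i0 < m | i0 != i) (if i == i0 then 0 else F i0) = \big[Rplus/0]_(i0 < m | i0 != i) F i0.
  by apply: eq_bigr => j; rewrite eq_sym => /negbTE ->.
set X := bigop _ _ _. ring. Qed.

Lemma sum_two m (i j : 'I_m) (u v : 'I_m -> R) : i != j ->
  sumI (fun k => if k == i then u k else if k == j then v k else 0) = u i + v j.
Proof.
move=> ij; rewrite /sumI (bigD1 i) //= eqxx (bigD1 j) /=; last by rewrite eq_sym.
rewrite eqxx eq_sym (negbTE ij) big1; first ring.
by move=> k /andP [ki kj]; rewrite (negbTE ki) (negbTE kj).
Qed.

Lemma enum_sum N (F : 'I_N -> R) (P : pred 'I_N) : \big[Rplus/0]_(i <- enum 'I_N | P i) F i = \big[Rplus/0]_(i < N | P i) F i.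
Proof. by rewrite big_enum_cond; apply: eq_bigl => i. Qed.

Lemma sum_pairs N (U : 'I_N -> 'I_N -> R) :
  sumS (upairs N) (fun p => U p.1 p.2 + U p.2 p.1) = sumI (fun i => sumI (fun j => if i == j then 0 else U i j)).
Proof.
rewrite /sumS /upairs big_allpairs_dep /=.
under eq_bigr do rewrite big_filter enum_sum badd.
rewrite (enum_sum _ predT) badd.
rewrite [X in _ + X](eq_bigr (fun i : 'I_N => \big[Rplus/0]_(j < N) (if (i < j)%N then U j i else 0))); last first.
  by move=> i _; rewrite big_mkcond.
rewrite exchange_big /=.
rewrite /sumI -badd; apply: eq_bigr => i _.
rewrite big_mkcond -badd; apply: eq_bigr => j _ /=.
case: ltngtP => [h1|h1|h1].
- by rewrite ifN ?(ltn_eqF h1) //; first ring; rewrite neq_ltn h1.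
- by rewrite ifN; first ring; rewrite neq_ltn h1 orbT.
- by rewrite (_ : i == j) //; first ring; apply/eqP/val_inj.
Qed.

Definition scale N (ns : 'I_N -> nat) (t : R) (s : vec ns) : vec ns := fun i l => t * s i l.

Lemma vext N (ns : 'I_N -> nat) (x y : vec ns) : (forall i l, x i l = y i l) -> x = y.
Proof. move=> H; apply: functional_extensionality_dep => i; apply: functional_extensionality_dep => l; exact: H. Qed.

Lemma blocknorm2_ge0 N (ns : 'I_N -> nat) (x : vec ns) i : 0 <= blocknorm2 x i.
Proof. rewrite /blocknorm2 /sumI; elim/big_ind: _ => //; [lra| move=> *; lra | move=> l _; nra]. Qed.

Lemma pairnorm2_ge0 N (ns : 'I_N -> nat) (x : vec ns) i j : 0 <= pairnorm2 i j x.
Proof. rewrite /pairnorm2 /sumI; elim/big_ind: _ => //; [lra| move=> *; lra | move=> k _].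
case: ifP => _; [exact: blocknorm2_ge0| lra]. Qed.

Lemma inner_scale N (ns : 'I_N -> nat) (u s : vec ns) t : inner u (scale t s) = t * inner u s.
Proof.
rewrite /inner /sumI -bscal; apply: eq_bigr => i _; rewrite -bscal; apply: eq_bigr => l _.
rewrite /scale; ring. Qed.

Lemma inner_vsub N (ns : 'I_N -> nat) (u v s : vec ns) : inner u s - inner v s = inner (vsub u v) s.
Proof.
rewrite /inner /sumI -bsub; apply: eq_bigr => i _; rewrite -bsub; apply: eq_bigr => l _.
rewrite /vsub; ring. Qed.

Lemma enorm_scale N (ns : 'I_N -> nat) (s : vec ns) t : enorm (scale t s) = Rabs t * enorm s.
Proof.
rewrite /enorm.
have -> : sumI (fun i => blocknorm2 (scale t s) i) = (t * t) * sumI (fun i => blocknorm2 s i).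
  rewrite /sumI -bscal; apply: eq_bigr => i _; rewrite /blocknorm2 /sumI -bscal; apply: eq_bigr => l _.
  rewrite /scale; ring.
rewrite sqrt_mult_alt; last nra.
by rewrite -sqrt_Rsqr_abs.
Qed.

Lemma phi_deriv N (ns : 'I_N -> nat) (f : vec ns -> R) (g : vec ns -> vec ns)
  (Hgrad : is_gradient f g) (x s : vec ns) (t : R) :
  derivable_pt_lim (fun t => f (vadd x (scale t s))) t (inner (g (vadd x (scale t s))) s).
Proof.
move=> eps He.
set y := vadd x (scale t s).
set n := enorm s.
have Hn : 0 <= n by apply: sqrt_pos.
have He' : 0 < eps / 2 / (n + 1) by apply: Rdiv_lt_0_compat; lra.
have [d [Hd H]] := Hgrad y _ He'.
have Hd' : 0 < d / (n + 1) by apply: Rdiv_lt_0_compat; lra.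
exists (mkposreal _ Hd') => hr Hh0 /= Hh.
have Habs : 0 < Rabs hr by apply: Rabs_pos_lt.
have Hn1 : enorm (scale hr s) < d.
  rewrite enorm_scale -/n.
  have : Rabs hr * (n + 1) < d.
    have := Rmult_lt_compat_r (n+1) _ _ ltac:(lra) Hh.
    by rewrite /Rdiv Rmult_assoc Rinv_l ?Rmult_1_r; lra.
  nra.
have := H _ Hn1.
have -> : vadd y (scale hr s) = vadd x (scale (t + hr) s).
  by apply: vext => i l; rewrite /y /vadd /scale; ring.
rewrite inner_scale enorm_scale -/n => H2.
set D := f (vadd x (scale (t + hr) s)) - f y - hr * inner (g y) s.
rewrite -/D in H2.
have -> : (f (vadd x (scale (t + hr) s)) - f y) / hr - inner (g y) s = D / hr.
  by rewrite /D; field.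
rewrite /Rdiv Rabs_mult Rabs_inv -/(Rdiv _ _).
apply: (Rle_lt_trans _ (eps / 2 / (n + 1) * n)).
  apply: (Rmult_le_reg_r (Rabs hr)) => //.
  rewrite /Rdiv Rmult_assoc Rinv_l; last lra.
  move: H2; rewrite /Rdiv; nra.
set k := / (n + 1).
have Hk : k * (n + 1) = 1 by rewrite /k Rinv_l; lra.
have Hk0 : 0 < k by rewrite /k; apply: Rinv_0_lt_compat; lra.
rewrite /Rdiv -/k. nra.
Qed.

Lemma amgm_pair N (ns : 'I_N -> nat) (u s : vec ns) i j m :
  supported2 i j s -> 0 < m ->
  inner u s <= pairnorm2 i j u / (2 * m) + m / 2 * pairnorm2 i j s.
Proof.
move=> Hs Hm.
have -> : pairnorm2 i j u / (2 * m) + m / 2 * pairnorm2 i j s =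
  sumI (fun k => if (k == i) || (k == j) then blocknorm2 u k / (2 * m) + m / 2 * blocknorm2 s k else 0).
  rewrite /pairnorm2 /Rdiv Rmult_comm /sumI -bscal -bscal -badd; apply: eq_bigr => k _.
  case: ifP => _; ring.
rewrite /inner /sumI; apply: ble => k _.
case: ifP => Hk.
- rewrite /blocknorm2 /sumI /Rdiv Rmult_comm -bscal -bscal -badd; apply: ble => l _.
  have Hm2 : 0 < / (2 * m) by apply: Rinv_0_lt_compat; lra.
  have E : / (2 * m) * (2 * m) = 1 by rewrite Rinv_l; lra.
  have E2 : / (2 * m) * m = / 2 by field; lra.
  have := Rmult_le_pos _ _ (Rlt_le _ _ Hm2) (Rle_0_sqr (u k l - m * s k l)).
  have Eq : / (2*m) * ((u k l - m * s k l)*(u k l - m * s k l)) = / (2*m) * (u k l * u k l) - u k l * s k l + m * / 2 * (s k l * s k l) by field; lra.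
  rewrite /Rsqr; lra.
- apply: Req_le; apply: big1 => l _; rewrite Hs ?Hk //; ring.
Qed.

Lemma pairnorm2_scale N (ns : 'I_N -> nat) (s : vec ns) i j c :
  pairnorm2 i j (scale c s) = c * c * pairnorm2 i j s.
Proof.
rewrite /pairnorm2 /sumI -bscal; apply: eq_bigr => k _; case: ifP => _; last ring.
rewrite /blocknorm2 /sumI -bscal; apply: eq_bigr => l _; rewrite /scale; ring.
Qed.

Lemma descent N (ns : 'I_N -> nat) (f : vec ns -> R) (g : vec ns -> vec ns) (L : 'I_N -> 'I_N -> R)
  (Hgrad : is_gradient f g) (HLpos : forall i j, 0 < L i j)
  (HLip : forall (i j : 'I_N) (x s : vec ns), supported2 i j s ->
     sqrt (pairnorm2 i j (vsub (g (vadd x s)) (g x))) <= L i j * sqrt (pairnorm2 i j s))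
  x i j s : supported2 i j s ->
  f (vadd x s) <= f x + inner (g x) s + L i j / 2 * pairnorm2 i j s.
Proof.
move=> Hs.
set K := inner (g x) s.
set C := L i j / 2 * pairnorm2 i j s.
set psi := fun t => f (vadd x (scale t s)) - K * t - C * (t * t).
have Hd : forall t, derivable_pt_lim psi t
   (inner (g (vadd x (scale t s))) s - K * 1 - C * (1 * t + t * 1)).
  move=> t.
  apply: (derivable_pt_lim_minus _ _ _ _ _ (derivable_pt_lim_minus _ _ _ _ _ (phi_deriv Hgrad x s t)
     (derivable_pt_lim_scal id K t 1 (derivable_pt_lim_id t)))).
  apply: (derivable_pt_lim_scal (mult_fct id id) C t).
  exact: (derivable_pt_lim_mult id id t 1 1 (derivable_pt_lim_id t) (derivable_pt_lim_id t)).
pose pr : derivable psi := fun t => exist _ _ (Hd t).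
have [c [Hc Hc01]] := MVT_cor1 psi 0 1 pr ltac:(lra).
move: Hc; rewrite /pr /=.
rewrite /psi.
have -> : vadd x (scale 1 s) = vadd x s by apply: vext => k l; rewrite /vadd /scale; ring.
have -> : vadd x (scale 0 s) = x by apply: vext => k l; rewrite /vadd /scale; ring.
set Lc := L i j * c.
have HLc : 0 < Lc by rewrite /Lc; move: (HLpos i j); nra.
have H1 := amgm_pair (vsub (g (vadd x (scale c s))) (g x)) Hs HLc.
rewrite -inner_vsub -/K in H1.
have Hs' : supported2 i j (scale c s) by move=> k Hk l; rewrite /scale Hs //; ring.
have H2 := HLip i j x (scale c s) Hs'.
rewrite pairnorm2_scale sqrt_mult_alt in H2; last nra.
rewrite sqrt_square in H2; last lra.
set Pu := pairnorm2 i j (vsub (g (vadd x (scale c s))) (g x)) in H1 H2.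
move=> Hc; rewrite /C in Hc *; clear pr Hd psi C.
set Ps := pairnorm2 i j s in H1 H2 Hc *.
have HPu : 0 <= Pu := pairnorm2_ge0 _ _ _.
have HPs : 0 <= Ps := pairnorm2_ge0 _ _ _.
have H3 : Pu <= Lc * Lc * Ps.
  rewrite -(sqrt_sqrt Pu) // -(sqrt_sqrt Ps) //.
  have := sqrt_pos Pu; have := sqrt_pos Ps; rewrite /Lc; nra.
have H4 : Pu / (2 * Lc) <= Lc / 2 * Ps.
  apply: (Rmult_le_reg_r (2 * Lc)); first lra.
  rewrite /Rdiv Rmult_assoc Rinv_l; nra.
rewrite /C /Lc in H4 H1 *.
nra.
Qed.

Lemma sum_ge0 m (F : 'I_m -> R) : (forall k, 0 <= F k) -> 0 <= sumI F.
Proof. move=> H; rewrite /sumI; elim/big_ind: _ => //; [lra| move=> *; lra]. Qed.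

Lemma sum_ge_term m (F : 'I_m -> R) i : (forall k, 0 <= F k) -> F i <= sumI F.
Proof.
move=> H; rewrite /sumI (bigD1 i) //=.
have : 0 <= \big[Rplus/0]_(k < m | k != i) F k.
  elim/big_ind: _ => //; [lra| move=> *; lra].
set X := bigop _ _ _; lra.
Qed.

Lemma sqrt_sq x : 0 <= x -> sqrt x * sqrt x = x.
Proof. exact: sqrt_sqrt. Qed.

Lemma normL_sq N (ns : 'I_N -> nat) (Lam : 'I_N -> R) (d : vec ns) :
  (forall i, 0 < Lam i) -> normL Lam d * normL Lam d = sumI (fun i => Lam i * blocknorm2 d i).
Proof.
move=> HL; rewrite /normL sqrt_sq //; apply: sum_ge0 => k.
by have := HL k; have := blocknorm2_ge0 d k; nra.
Qed.

Lemma hconv1 (phi : R -> R) : convexR phi -> forall t u v, 0 <= t <= 1 ->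
  phi (v + t * u) <= t * phi (v + u) + (1 - t) * phi v.
Proof.
move=> H t u v Ht; have := H (v + u) v t Ht.
by have -> : t * (v + u) + (1 - t) * v = v + t * u by ring.
Qed.

Lemma strong_conv N (ns : 'I_N -> nat) (f h : vec ns -> R) (g : vec ns -> vec ns)
  (hh : forall i : 'I_N, 'I_(ns i) -> R -> R) (a : vec ns) (Lam : 'I_N -> R)
  (Hh : forall x, h x = sumI (fun i => sumI (fun l : 'I_(ns i) => hh i l (x i l))))
  (Hhconv : forall i l, convexR (hh i l)) (HL : forall i, 0 < Lam i) x d t :
  IsArgmin (fun s => inner a s = 0) (dL_obj f h g Lam x) d -> 0 <= t < 1 ->
  inner (g x) d + (h (vadd x d) - h x) <= - ((1 + t) / 2) * sumI (fun i => Lam i * blocknorm2 d i).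
Proof.
move=> [Hd Hmin] Ht.
have Hf : inner a (scale t d) = 0 by rewrite inner_scale Hd; ring.
have := Hmin _ Hf; rewrite /dL_obj !normL_sq // inner_scale.
set q := sumI (fun i => Lam i * blocknorm2 d i).
have -> : sumI (fun i => Lam i * blocknorm2 (scale t d) i) = t * t * q.
  rewrite /q /sumI -bscal; apply: eq_bigr => i _; rewrite /blocknorm2 /sumI.
  rewrite -bscal -bscal -bscal; apply: eq_bigr => l _; rewrite /scale; ring.
have Hc : h (vadd x (scale t d)) <= t * h (vadd x d) + (1 - t) * h x.
  rewrite !Hh /sumI -bscal -bscal -badd; apply: ble => i _.
  rewrite -bscal -bscal -badd; apply: ble => l _.
  rewrite /vadd /scale; apply: hconv1 => //; lra.
move=> H.
set A := inner (g x) d + (h (vadd x d) - h x).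
have H2 : (1 - t) * (A + (1 + t) / 2 * q) <= 0.
  rewrite /A; nra.
have : A + (1 + t) / 2 * q <= 0.
  apply: (Rmult_le_reg_l (1 - t)); lra.
lra.
Qed.

Definition Wp N (w : 'I_N -> R) := sumI (fun k => Rmax (w k) 0).
Definition lam N (w : 'I_N -> R) (i j : 'I_N) : R :=
  if Req_dec_T (w i) 0 then / (INR N - 1)
  else if Rlt_dec 0 (w i) then Rmax (- w j) 0 / Wp w else Rmax (w j) 0 / Wp w.

Lemma INR_N2 N : (2 <= N)%N -> 2 <= INR N.
Proof. move=> /leP H; have := le_INR _ _ H; simpl; lra. Qed.

Lemma Rmax_diff u : Rmax u 0 - Rmax (- u) 0 = u.
Proof. rewrite /Rmax; do 2 case: Rle_dec => ? /=; lra. Qed.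

Ltac gen_inv := repeat match goal with |- context [Rinv ?x] => let y := fresh "iv" in set y := Rinv x end.
Ltac rring := rewrite ?/Rdiv; gen_inv; ring.

Lemma Rdiv_ge0 u v : 0 <= u -> 0 < v -> 0 <= u / v.
Proof. move=> Hu Hv; apply: Rmult_le_pos => //; apply: Rlt_le; exact: Rinv_0_lt_compat. Qed.

Section Lam.
Variables (N : nat) (w : 'I_N -> R).
Hypothesis HN : (2 <= N)%N.
Hypothesis Hw : sumI w = 0.

Lemma Wn : sumI (fun k => Rmax (- w k) 0) = Wp w.
Proof.
have : Wp w - sumI (fun k => Rmax (- w k) 0) = sumI w.
  by rewrite /Wp /sumI -bsub; apply: eq_bigr => k _; rewrite Rmax_diff.
rewrite Hw; lra.
Qed.

Lemma Wp_ge_pos k : Rmax (w k) 0 <= Wp w.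
Proof. by apply: sum_ge_term => j; apply: Rmax_r. Qed.
Lemma Wp_ge_neg k : Rmax (- w k) 0 <= Wp w.
Proof. by rewrite -Wn; apply: sum_ge_term => j; apply: Rmax_r. Qed.

Lemma Wp_pos i : w i <> 0 -> 0 < Wp w.
Proof.
move=> H; case: (Rlt_dec 0 (w i)) => H1.
- by have := Wp_ge_pos i; have := Rmax_l (w i) 0; lra.
- by have := Wp_ge_neg i; have := Rmax_l (- w i) 0; lra.
Qed.

Lemma lam_ge0 i j : 0 <= lam w i j.
Proof.
have HN2 := INR_N2 HN.
rewrite /lam; case: Req_dec_T => H.
  by apply: Rlt_le; apply: Rinv_0_lt_compat; lra.
have HW := Wp_pos H.
case: Rlt_dec => ?; apply: Rdiv_ge0 => //; apply: Rmax_r.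
Qed.

Lemma lam_le1 i j : lam w i j <= 1.
Proof.
have HN2 := INR_N2 HN.
rewrite /lam; case: Req_dec_T => H.
  rewrite -Rinv_1; apply: Rinv_le_contravar; lra.
have HW := Wp_pos H.
case: Rlt_dec => ?; [have := Wp_ge_neg j | have := Wp_ge_pos j] => H2;
  apply: (Rmult_le_reg_r (Wp w)) => //; rewrite /Rdiv Rmult_assoc Rinv_l; lra.
Qed.

Lemma lam_feas i j : w i * lam w i j + w j * lam w j i = 0.
Proof.
rewrite /lam.
case: (Req_dec_T (w i) 0) => Hi; case: (Req_dec_T (w j) 0) => Hj /=.
- rewrite Hi Hj; ring.
- rewrite Hi Ropp_0 /Rmax; case: Rlt_dec => ? /=; case: Rle_dec => ? /=; rring.
- rewrite Hj Ropp_0 /Rmax; case: Rlt_dec => ? /=; case: Rle_dec => ? /=; rring.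
- have HW : Wp w <> 0 by have := Wp_pos Hi; lra.
  rewrite /Rmax; case: Rlt_dec => ? /=; case: Rlt_dec => ? /=;
  do 2 case: Rle_dec => ? /=; set W := Wp w in HW *; first [exfalso; lra | field; exact HW].
Qed.

Lemma sumI_divr m (F : 'I_m -> R) c : sumI (fun j => F j / c) = sumI F / c.
Proof. rewrite /Rdiv Rmult_comm /sumI -bscal; apply: eq_bigr => j _; ring. Qed.

Lemma lam_sum i : sumI (fun j => if i == j then 0 else lam w i j) = 1.
Proof.
have HN2 := INR_N2 HN.
rewrite sum_ne /lam; case: Req_dec_T => H /=.
  rewrite sumI_const; field; lra.
have HW := Wp_pos H.
case: Rlt_dec => H1 /=; rewrite sumI_divr.
- rewrite Wn Rmax_right; last lra.
  by field; lra.
- rewrite -/(Wp w) Rmax_right; last lra.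
  by field; lra.
Qed.
End Lam.

Definition spair N (ns : 'I_N -> nat) (lm : 'I_N -> 'I_N -> R) (d : vec ns) (i j : 'I_N) : vec ns :=
  fun k l => if k == i then lm i j * d k l else if k == j then lm j i * d k l else 0.
Definition bi N (ns : 'I_N -> nat) (u d : vec ns) (k : 'I_N) := sumI (fun l : 'I_(ns k) => u k l * d k l).


Lemma sp_supp (N : nat) (ns : 'I_N -> nat) (lm : 'I_N -> 'I_N -> R) (d : vec ns) (i j : 'I_N) : supported2 i j (spair lm d i j).
Proof. move=> k Hk l; rewrite /spair; by move/norP: Hk => [/negbTE -> /negbTE ->]. Qed.

Lemma sp_inner (N : nat) (ns : 'I_N -> nat) (lm : 'I_N -> 'I_N -> R) (d : vec ns) (i j : 'I_N) (ij : i != j) u : inner u (spair lm d i j) = lm i j * bi u d i + lm j i * bi u d j.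
Proof.
rewrite -(sum_two (fun k => lm i j * bi u d k) (fun k => lm j i * bi u d k) ij).
rewrite /inner; apply: eq_bigr => k _; rewrite /spair /bi.
case: ifP => _; first by rewrite /sumI -bscal; apply: eq_bigr => l _; ring.
case: ifP => _; first by rewrite /sumI -bscal; apply: eq_bigr => l _; ring.
by apply: big1 => l _; ring.
Qed.

Lemma sp_pn2 (N : nat) (ns : 'I_N -> nat) (lm : 'I_N -> 'I_N -> R) (d : vec ns) (i j : 'I_N) (ij : i != j) : pairnorm2 i j (spair lm d i j) =
  lm i j * lm i j * blocknorm2 d i + lm j i * lm j i * blocknorm2 d j.
Proof.
rewrite -(sum_two (fun k => lm i j * lm i j * blocknorm2 d k) (fun k => lm j i * lm j i * blocknorm2 d k) ij).
rewrite /pairnorm2; apply: eq_bigr => k _; rewrite /spair /blocknorm2.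
case Hi: (k == i) => /=; first by rewrite /sumI -bscal; apply: eq_bigr => l _; ring.
case Hj: (k == j) => /=; first by rewrite /sumI -bscal; apply: eq_bigr => l _; ring.
done.

Qed.

Lemma sp_h (N : nat) (ns : 'I_N -> nat) (lm : 'I_N -> 'I_N -> R) (d : vec ns) (i j : 'I_N) (ij : i != j) (h : vec ns -> R) (hh : forall i : 'I_N, 'I_(ns i) -> R -> R)
  (Hh : forall x, h x = sumI (fun i => sumI (fun l : 'I_(ns i) => hh i l (x i l))))
  (Hhconv : forall i l, convexR (hh i l)) (Hlm : forall p q, 0 <= lm p q <= 1) (x : vec ns) :
  h (vadd x (spair lm d i j)) <= h x +
    (lm i j * sumI (fun l : 'I_(ns i) => hh i l (x i l + d i l) - hh i l (x i l)) +
     lm j i * sumI (fun l : 'I_(ns j) => hh j l (x j l + d j l) - hh j l (x j l))).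
Proof.
rewrite -(sum_two (fun k => lm i j * sumI (fun l : 'I_(ns k) => hh k l (x k l + d k l) - hh k l (x k l)))
   (fun k => lm j i * sumI (fun l : 'I_(ns k) => hh k l (x k l + d k l) - hh k l (x k l))) ij).
rewrite !Hh /sumI -badd; apply: ble => k _; rewrite /vadd /spair.
case: ifP => _.
  rewrite -bscal -badd; apply: ble => l _.
  have := hconv1 (Hhconv k l) (d k l) (x k l) (Hlm i j); lra.
case: ifP => _.
  rewrite -bscal -badd; apply: ble => l _.
  have := hconv1 (Hhconv k l) (d k l) (x k l) (Hlm j i); lra.
apply: Req_le; rewrite Rplus_0_r; apply: eq_bigr => l _; by rewrite Rplus_0_r.
Qed.

Lemma upairs_neq N (p : 'I_N * 'I_N) : p \in upairs N -> p.1 != p.2.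
Proof.
case/allpairsPdep => i [j [_ Hj ->]] /=.
by move: Hj; rewrite mem_filter => /andP [H _]; rewrite neq_ltn H.
Qed.

Lemma size_upairs N : INR (size (upairs N)) = INR N * (INR N - 1) / 2.
Proof.
have := sum_pairs (fun _ _ : 'I_N => / 2).
have -> : sumS (upairs N) (fun _ => /2 + /2) = INR (size (upairs N)).
  by rewrite /sumS (eq_bigr (fun _ => 1)) ?bconst ?Rmult_1_r // => p _; field.
move=> ->.
transitivity (sumI (fun _ : 'I_N => INR N * / 2 - / 2)).
  by apply: eq_bigr => i _; rewrite sum_ne sumI_const.
rewrite sumI_const; field.
Qed.

Lemma Gam_pos N (L : 'I_N -> 'I_N -> R) (HN : (2 <= N)%N) (HLpos : forall i j, 0 < L i j) i : 0 < Gam L i.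
Proof.
have HN2 := INR_N2 HN.
rewrite /Gam; apply: Rmult_lt_0_compat; first by apply: Rinv_0_lt_compat; lra.
apply: (Rlt_le_trans _ (L i i)) => //; apply: sum_ge_term => k; exact: Rlt_le.
Qed.

Lemma one_step (N : nat) (ns : 'I_N -> nat)
  (HN : (2 <= N)%N)
  (f : vec ns -> R) (g : vec ns -> vec ns)
  (h : vec ns -> R) (hh : forall i : 'I_N, 'I_(ns i) -> R -> R)
  (a : vec ns) (L : 'I_N -> 'I_N -> R)
  (dp : vec ns -> 'I_N -> 'I_N -> vec ns) (dN : vec ns -> vec ns)
  (Hgrad : is_gradient f g)
  (HLpos : forall i j, 0 < L i j) (HLsym : forall i j, L i j = L j i)
  (HLip : forall (i j : 'I_N) (x s : vec ns), supported2 i j s ->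
     sqrt (pairnorm2 i j (vsub (g (vadd x s)) (g x))) <= L i j * sqrt (pairnorm2 i j s))
  (Hh : forall x, h x = sumI (fun i => sumI (fun l : 'I_(ns i) => hh i l (x i l))))
  (Hhconv : forall i l, convexR (hh i l))
  (Hdp : forall x (i j : 'I_N), i <> j ->
     IsArgmin (rcd_feas a i j) (rcd_obj f h g L x i j) (dp x i j))
  (HdN : forall x, IsArgmin (fun s => inner a s = 0)
     (dL_obj f h g (fun i => INR N * Gam L i) x) (dN x)) (x : vec ns) :
  / INR (size (upairs N)) * sumS (upairs N) (fun p => f (rcd_step dp x p) + h (rcd_step dp x p))
  + (dnormL (Gam L) (Dmul (Gam L) (dN x)) * dnormL (Gam L) (Dmul (Gam L) (dN x))) / INR N
  <= f x + h x.
Proof.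
have HN2 := INR_N2 HN.
have HGam := Gam_pos HN HLpos.
set d := dN x.
set w := fun k => bi a d k.
have Hw : sumI w = 0 by have [H _] := HdN x.
set lm := lam w.
have Hlm : forall p q, 0 <= lm p q <= 1 by move=> p q; split; [exact: lam_ge0 HN Hw _ _ | exact: lam_le1 HN Hw _ _].
set G := fun k => bi (g x) d k.
set B := fun k => blocknorm2 d k.
set H := fun k => sumI (fun l : 'I_(ns k) => hh k l (x k l + d k l) - hh k l (x k l)).
set T := fun i j => lm i j * (G i + H i) + L i j / 2 * (lm i j * lm i j) * B i.
have Hpair : forall p, p \in upairs N ->
    f (rcd_step dp x p) + h (rcd_step dp x p) <= f x + h x + (T p.1 p.2 + T p.2 p.1).
  case=> i j /upairs_neq /= ij.
  have ij' : i <> j by move/eqP: ij.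
  have [[Hsupp _] Hmin] := Hdp x i j ij'.
  have Hdes := descent Hgrad HLpos HLip x Hsupp.
  have Hfe : rcd_feas a i j (spair lm d i j).
    split; first exact: sp_supp.
    rewrite sp_inner //; have := lam_feas Hw i j; rewrite /w -/lm; lra.
  have Hm := Hmin _ Hfe.
  move: Hm; rewrite /rcd_obj /rcd_step /= sp_inner // sp_pn2 // => Hm.
  have Hhs := @sp_h N ns lm d i j ij h hh Hh Hhconv Hlm x.
  rewrite /T /B /H (HLsym j i).
  move: Hm Hhs; rewrite -/(G i) -/(G j).
  set X1 := lm i j; set X2 := lm j i.
  lra.
have Hsum : sumS (upairs N) (fun p => f (rcd_step dp x p) + h (rcd_step dp x p)) <=
   INR (size (upairs N)) * (f x + h x) + sumI (fun i => sumI (fun j => if i == j then 0 else T i j)).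
  apply: (Rle_trans _ (sumS (upairs N) (fun p => f x + h x + (T p.1 p.2 + T p.2 p.1)))).
    rewrite /sumS big_seq [in X in _ <= X]big_seq; apply: ble => p; exact: Hpair.
  rewrite /sumS badd bconst -/(sumS _ _) sum_pairs; lra.
have HT : forall i, sumI (fun j => if i == j then 0 else T i j) <= G i + H i + / 2 * B i * sumI (fun j => L i j).
  move=> i.
  have -> : sumI (fun j => if i == j then 0 else T i j) = (G i + H i) * sumI (fun j => if i == j then 0 else lm i j)
       + sumI (fun j => if i == j then 0 else L i j / 2 * (lm i j * lm i j) * B i).
    rewrite /sumI -bscal -badd; apply: eq_bigr => j _; case: ifP => _; rewrite /T; ring.
  rewrite lam_sum // Rmult_1_r.
  have : sumI (fun j => if i == j then 0 else L i j / 2 * (lm i j * lm i j) * B i) <= / 2 * B i * sumI (fun j => L i j).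
    rewrite /sumI -bscal; apply: ble => j _.
    have HB : 0 <= B i by exact: blocknorm2_ge0.
    have HL := HLpos i j; have [H0 H1] := Hlm i j.
    have HLB : 0 <= L i j * B i by apply: Rmult_le_pos; lra.
    have Hl2 : lm i j * lm i j <= 1 by nra.
    case: ifP => _.
      have : 0 <= / 2 * (L i j * B i) by apply: Rmult_le_pos; lra.
      lra.
    have : L i j / 2 * (lm i j * lm i j) * B i = / 2 * (L i j * B i) * (lm i j * lm i j) by rring.
    have : / 2 * B i * L i j = / 2 * (L i j * B i) by rring.
    nra.
  lra.
set q := sumI (fun i => INR N * Gam L i * blocknorm2 d i).
have HA : sumI (fun i => G i + H i + / 2 * B i * sumI (fun j => L i j)) =
    inner (g x) d + (h (vadd x d) - h x) + / 2 * q.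
  rewrite /sumI badd badd; congr (_ + _ + _).
  - rewrite !Hh /sumI -bsub; apply: eq_bigr => i _; rewrite -bsub; apply: eq_bigr => l _; done.
  - rewrite /q /sumI -bscal; apply: eq_bigr => i _; rewrite /Gam /B /sumI; set SL := bigop _ _ _; field; lra.
have HNpos : 0 < INR N by lra.
have HLam : forall i, 0 < INR N * Gam L i by move=> i; apply: Rmult_lt_0_compat.
set t := (INR N - 1) / INR N.
have Ht : 0 <= t < 1.
  rewrite /t; split; first by apply: Rdiv_ge0; lra.
  apply: (Rmult_lt_reg_r (INR N)) => //; rewrite /Rdiv Rmult_assoc Rinv_l; lra.
have HS : inner (g x) d + (h (vadd x d) - h x) <= - ((1 + t) / 2) * q.
  exact: (@strong_conv N ns f h g hh a (fun i => INR N * Gam L i) Hh Hhconv HLam x d t (HdN x) Ht).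
have HM : dnormL (Gam L) (Dmul (Gam L) d) * dnormL (Gam L) (Dmul (Gam L) d) = q / INR N.
  rewrite /dnormL sqrt_sq; last first.
    apply: sum_ge0 => k; apply: Rmult_le_pos; last exact: blocknorm2_ge0.
    by apply: Rlt_le; apply: Rinv_0_lt_compat.
  rewrite /q -sumI_divr; apply: eq_bigr => k _.
  have -> : blocknorm2 (Dmul (Gam L) d) k = Gam L k * Gam L k * blocknorm2 d k.
    by rewrite /blocknorm2 /sumI -bscal; apply: eq_bigr => l _; rewrite /Dmul; ring.
  have := HGam k; set GG := Gam L k; set BB := blocknorm2 d k; move=> ?; field; lra.
have HTs : sumI (fun i => sumI (fun j => if i == j then 0 else T i j)) <=
    sumI (fun i => G i + H i + / 2 * B i * sumI (fun j => L i j)).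
  by rewrite /sumI; apply: ble => i _; exact: HT.
rewrite -/d HM size_upairs.
set S := sumS _ _ in Hsum *.
rewrite size_upairs in Hsum.
set P := INR N * (INR N - 1) / 2 in Hsum *.
have HP : 0 < P by rewrite /P; apply: Rdiv_lt_0_compat; [nra | lra].
have HS2 : S <= P * (f x + h x) - t / 2 * q by lra.
have E : / P * (P * (f x + h x) - t / 2 * q) = f x + h x - q / (INR N * INR N).
  rewrite /P /t; field; lra.
have : / P * S <= / P * (P * (f x + h x) - t / 2 * q).
  apply: Rmult_le_compat_l => //; apply: Rlt_le; exact: Rinv_0_lt_compat.
have -> : q / INR N / INR N = q / (INR N * INR N) by field; lra.
lra.
Qed.

Lemma inner_add N (ns : 'I_N -> nat) (u x s : vec ns) : inner u (vadd x s) = inner u x + inner u s.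
Proof.
rewrite /inner /sumI -badd; apply: eq_bigr => i _; rewrite -badd; apply: eq_bigr => l _.
rewrite /vadd; ring. Qed.

Lemma sumS_scal (T : Type) (s : seq T) (F : T -> R) c : sumS s (fun p => c * F p) = c * sumS s F.
Proof. exact: bscal. Qed.

Lemma min_upto_le k (u : nat -> R) : min_upto k u * INR (k + 1) <= sum_f_R0 u k.
Proof.
elim: k => [|k IH]; first by simpl; lra.
change (min_upto k.+1 u) with (Rmin (min_upto k u) (u k.+1)).
change (sum_f_R0 u k.+1) with (sum_f_R0 u k + u k.+1).
have H1 := Rmin_l (min_upto k u) (u k.+1).
have H2 := Rmin_r (min_upto k u) (u k.+1).
have Hk : 0 <= INR (k + 1) by apply: pos_INR.
rewrite addSn S_INR.
have H3 := Rmult_le_compat_r _ _ _ Hk H1. lra.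
Qed.
Unset Implicit Arguments.
Set Strict Implicit.

Theorem theorem4
  (N : nat) (ns : 'I_N -> nat)
  (HN : (2 <= N)%N) (Hns : forall i, (0 < ns i)%N)
  (f : vec ns -> R) (g : vec ns -> vec ns)
  (h : vec ns -> R) (hh : forall i : 'I_N, 'I_(ns i) -> R -> R)
  (a : vec ns) (b : R) (L : 'I_N -> 'I_N -> R) (Fstar : R)
  (dp : vec ns -> 'I_N -> 'I_N -> vec ns) (dN : vec ns -> vec ns) (x0 : vec ns)
  (* a nonzero *)
  (Ha : exists i l, a i l <> 0)
  (* Assumption A2 (i) *)
  (Hgrad : is_gradient f g)
  (HLpos : forall i j, 0 < L i j) (HLsym : forall i j, L i j = L j i)
  (HLip : forall (i j : 'I_N) (x s : vec ns), supported2 i j s ->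
     sqrt (pairnorm2 i j (vsub (g (vadd x s)) (g x))) <= L i j * sqrt (pairnorm2 i j s))
  (* Assumption A2 (ii) *)
  (Hh : forall x, h x = sumI (fun i => sumI (fun l : 'I_(ns i) => hh i l (x i l))))
  (Hhconv : forall i l, convexR (hh i l))
  (* F^* = inf {F x : a^T x = b} is finite *)
  (HFlb : forall x, inner a x = b -> Fstar <= f x + h x)
  (HFglb : forall y, (forall x, inner a x = b -> y <= f x + h x) -> y <= Fstar)
  (* dp x i j is the direction d_{ij} computed by 2-RCD at x *)
  (Hdp : forall x (i j : 'I_N), i <> j ->
     IsArgmin (rcd_feas a i j) (rcd_obj f h g L x i j) (dp x i j))
  (* dN x = d_{N Gamma}(x) *)
  (HdN : forall x, IsArgmin (fun s => inner a s = 0)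
     (dL_obj f h g (fun i => INR N * Gam L i) x) (dN x))
  (Hx0 : inner a x0 = b) :
  forall k : nat,
    min_upto k (fun l => Expect (upairs N) l (fun s =>
       let M2 := dnormL (Gam L) (Dmul (Gam L) (dN (rcd_run dp x0 s))) in M2 * M2))
    <= INR N * (f x0 + h x0 - Fstar) / INR (k + 1).
Proof.
have HN2 := INR_N2 HN.
pose ps := upairs N.
pose F := fun y => f y + h y.
pose M := fun y => dnormL (Gam L) (Dmul (Gam L) (dN y)) * dnormL (Gam L) (Dmul (Gam L) (dN y)).
have HP : 0 < INR (size ps) by rewrite /ps size_upairs; apply: Rdiv_lt_0_compat; nra.
have HiP : 0 <= / INR (size ps) by apply: Rlt_le; apply: Rinv_0_lt_compat.
have Hstep : forall l x, Expect ps l.+1 (fun s => F (rcd_run dp x s)) +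
    Expect ps l (fun s => M (rcd_run dp x s)) / INR N <= Expect ps l (fun s => F (rcd_run dp x s)).
  elim => [|l IH] x.
    exact: (one_step HN Hgrad HLpos HLsym HLip Hh Hhconv Hdp HdN x).
  change (/ INR (size ps) * sumS ps (fun p => Expect ps l.+1 (fun s => F (rcd_run dp (rcd_step dp x p) s)))
    + / INR (size ps) * sumS ps (fun p => Expect ps l (fun s => M (rcd_run dp (rcd_step dp x p) s))) / INR N
    <= / INR (size ps) * sumS ps (fun p => Expect ps l (fun s => F (rcd_run dp (rcd_step dp x p) s)))).
  have H1 : sumS ps (fun p => Expect ps l.+1 (fun s => F (rcd_run dp (rcd_step dp x p) s)) +
                   / INR N * Expect ps l (fun s => M (rcd_run dp (rcd_step dp x p) s)))
         <= sumS ps (fun p => Expect ps l (fun s => F (rcd_run dp (rcd_step dp x p) s))).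
    apply: ble => p _; have := IH (rcd_step dp x p); rewrite /Rdiv; lra.
  move: H1; rewrite /sumS badd bscal -!/(sumS _ _).
  set A := sumS _ _; set C := sumS _ _; set B := sumS _ _ => H1.
  have := Rmult_le_compat_l _ _ _ HiP H1; rewrite /Rdiv; lra.
have Hlb : forall l x, inner a x = b -> Fstar <= Expect ps l (fun s => F (rcd_run dp x s)).
  elim => [|l IH] x Hx; first exact: HFlb.
  change (Fstar <= / INR (size ps) * sumS ps (fun p => Expect ps l (fun s => F (rcd_run dp (rcd_step dp x p) s)))).
  have H1 : INR (size ps) * Fstar <= sumS ps (fun p => Expect ps l (fun s => F (rcd_run dp (rcd_step dp x p) s))).
    rewrite -bconst /sumS big_seq [in X in _ <= X]big_seq; apply: ble => p Hp; apply: IH.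
    rewrite /rcd_step inner_add Hx.
    have Hne := upairs_neq Hp.
    have [[_ Hd] _] := Hdp x p.1 p.2 (elimN eqP Hne).
    by rewrite Hd Rplus_0_r.
  have := Rmult_le_compat_l _ _ _ HiP H1.
  rewrite -Rmult_assoc Rinv_l; lra.
pose Phi := fun l => Expect ps l (fun s => F (rcd_run dp x0 s)).
pose mm := fun l => Expect ps l (fun s => M (rcd_run dp x0 s)).
have Htel : forall k, sum_f_R0 (fun l => mm l / INR N) k <= Phi 0%N - Phi k.+1.
  elim => [|k IH].
    change (mm 0%N / INR N <= Phi 0%N - Phi 1%N).
    have := Hstep 0%N x0; rewrite /mm /Phi; lra.
  change (sum_f_R0 (fun l => mm l / INR N) k + mm k.+1 / INR N <= Phi 0%N - Phi k.+2).
  have := Hstep k.+1 x0; move: IH; rewrite /mm /Phi; lra.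
move=> k.
change (min_upto k mm <= INR N * (f x0 + h x0 - Fstar) / INR (k + 1)).
have H1 := min_upto_le k mm.
have H2 := Htel k.
have H3 := Hlb k.+1 x0 Hx0.
have E : sum_f_R0 (fun l => mm l / INR N) k = / INR N * sum_f_R0 mm k by rewrite scal_sum.
have HPhi0 : Phi 0%N = f x0 + h x0 by [].
have Hk : 0 < INR (k + 1) by apply: lt_0_INR; apply/ltP; rewrite addn1.
apply: (Rmult_le_reg_r (INR (k + 1))) => //.
rewrite /Rdiv Rmult_assoc Rinv_l; last lra.
rewrite Rmult_1_r.
have H4 : sum_f_R0 mm k <= INR N * (Phi 0%N - Phi k.+1).
  have := Rmult_le_compat_l _ _ _ (pos_INR N) H2.
  rewrite E -Rmult_assoc Rinv_r; lra.
move: H3; rewrite -/(Phi k.+1) => H3.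
nra.
Qed.
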